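(* Let $H$ be an undirected graph with $|V(H)|\le 11$. Then every acyclic orientation $\vec H$ of $H$ satisfies $\mathrm{dtw}(\vec H)\le 2$.
   Context: For a DAG $\vec H$, a source is a vertex of in-degree $0$; $S$ denotes the set of sources; $R(s)$ is the set of vertices reachable from $s$, and $R(B)=\bigcup_{s\in B}R(s)$. A DAG tree decomposition of $\vec H$ is a tree $T$ whose nodes (bags) are subsets of $S$ such that every source lies in some bag and, for any bags $B,B_1,B_2$ with $B$ on the path between $B_1$ and $B_2$ in $T$, $R(B_1)\cap R(B_2)\subseteq R(B)$; its width is the maximum bag size and $\mathrm{dtw}(\vec H)$ is the minimum width. *)

(* Defs.v *)
From mathcomp Require Import all_boot.
Set Implicit Arguments. Unset Strict Implicit. Unset Printing Implicit Defensive.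

Definition simple_graph (V : finType) (e : rel V) : Prop :=
  symmetric e /\ irreflexive e.

Definition orientation (V : finType) (e d : rel V) : Prop :=
  (forall x y, e x y = d x y || d y x) /\ (forall x y, d x y -> ~~ d y x).

Definition acyclic_digraph (V : finType) (d : rel V) : Prop :=
  forall x y, d x y -> ~~ connect d y x.

Definition sources (V : finType) (d : rel V) : {set V} :=
  [set v | [forall u, ~~ d u v]].

Definition reach (V : finType) (d : rel V) (s : V) : {set V} :=
  [set v | connect d s v].

Definition reachB (V : finType) (d : rel V) (B : {set V}) : {set V} :=
  \bigcup_(s in B) reach d s.

Definition simple_path (N : finType) (te : rel N) (t1 t2 : N) (p : seq N) : bool :=
  [&& path te t1 p, last t1 p == t2 & uniq (t1 :: p)].

Definition is_tree (N : finType) (te : rel N) : Prop :=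
  [/\ symmetric te, irreflexive te,
      (forall x y, connect te x y) &
      (forall x y p q, simple_path te x y p -> simple_path te x y q -> p = q)].

Definition dag_tree_decomposition (V N : finType) (d : rel V) (te : rel N)
    (B : N -> {set V}) : Prop :=
  [/\ is_tree te,
      (forall t, B t \subset sources d),
      (forall s, s \in sources d -> exists t, s \in B t) &
      (forall t1 t2 p t, simple_path te t1 t2 p -> t \in t1 :: p ->
          reachB d (B t1) :&: reachB d (B t2) \subset reachB d (B t))].

Definition dtd_width (N : finType) (V : finType) (B : N -> {set V}) : nat :=
  \max_(t : N) #|B t|.

Definition dtw_le (V : finType) (d : rel V) (k : nat) : Prop :=
  exists (n : nat) (te : rel 'I_n.+1) (B : 'I_n.+1 -> {set V}),
    dag_tree_decomposition d te B /\ dtd_width B <= k.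

(* Main.v *)
Require Import Defs.
From mathcomp Require Import all_boot zify.
Set Implicit Arguments. Unset Strict Implicit. Unset Printing Implicit Defensive.

Definition relc (X Y : finType) (col : Y -> {set X}) (G : {set Y}) :=
  [set u in G | 1 < #|col u|].
Definition actc (X Y : finType) (col : Y -> {set X}) (G : {set Y}) :=
  \bigcup_(u in relc col G) col u.
Definition muc (X Y : finType) (col : Y -> {set X}) (G : {set Y}) :=
  #|actc col G| + #|relc col G|.
Definition rmc (X Y : finType) (col : Y -> {set X}) (G : {set Y}) (a : X) :=
  [set u in G | a \notin col u].
Definition cols (X Y : finType) (col : Y -> {set X}) (G : {set Y}) (x : X) :=
  [set u in relc col G | x \in col u].
Definition degc (X Y : finType) (col : Y -> {set X}) (G : {set Y}) (x : X) :=
  #|cols col G x|.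

Lemma card_le_U (T : finType) (A B : {set T}) : #|A :|: B| <= #|A| + #|B|.
Proof. by rewrite cardsU leq_subr. Qed.

Lemma relc_sub (X Y : finType) (col : Y -> {set X}) G : relc col G \subset G.
Proof. by apply/subsetP=> u; rewrite inE => /andP[]. Qed.

Lemma relc_rm (X Y : finType) (col : Y -> {set X}) G a :
  relc col (rmc col G a) = [set u in relc col G | a \notin col u].
Proof. by apply/setP=> u; rewrite !inE; case: (u \in G); case: (a \in col u); case: (1 < _). Qed.

Lemma col_act (X Y : finType) (col : Y -> {set X}) G u : u \in relc col G -> col u \subset actc col G.
Proof. by move=> Hu; apply/subsetP=> x Hx; apply/bigcupP; exists u. Qed.

Lemma actP (X Y : finType) (col : Y -> {set X}) G x :
  reflect (exists2 u, u \in relc col G & x \in col u) (x \in actc col G).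
Proof. exact: bigcupP. Qed.

Lemma card_rel_rm (X Y : finType) (col : Y -> {set X}) G a :
  #|relc col (rmc col G a)| + degc col G a = #|relc col G|.
Proof.
rewrite -(cardsID [set u | a \in col u] (relc col G)) addnC /degc.
have -> : cols col G a = relc col G :&: [set u | a \in col u].
  by apply/setP => u; rewrite !inE.
rewrite relc_rm; congr (_ + _); apply: eq_card => u; rewrite !inE.
all: by case: (a \in col u); case: (u \in G); case: (1 < _).
Qed.

Lemma act_rm (X Y : finType) (col : Y -> {set X}) G a :
  actc col (rmc col G a) \subset actc col G :\ a.
Proof.
apply/subsetP=> x /actP[u]; rewrite relc_rm inE => /andP[Hu Ha] Hx.
rewrite !inE; apply/andP; split; last by apply/actP; exists u.
by apply: contraNneq Ha => <-.
Qed.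

Definition lost (X Y : finType) (col : Y -> {set X}) G a :=
  (actc col G :\ a) :\: actc col (rmc col G a).

Lemma mu_rm (X Y : finType) (col : Y -> {set X}) G a : a \in actc col G ->
  muc col (rmc col G a) + 1 + degc col G a + #|lost col G a| <= muc col G.
Proof.
move=> Ha; rewrite /muc /lost.
have H1 := card_rel_rm col G a.
have H2 := cardsID (actc col (rmc col G a)) (actc col G :\ a).
have H3 : (actc col G :\ a) :&: actc col (rmc col G a) = actc col (rmc col G a).
  by apply/setIidPr; exact: act_rm.
rewrite H3 in H2.
have H4 := cardsD1 a (actc col G); rewrite Ha in H4.
lia.
Qed.

Lemma mu_mono (X Y : finType) (col : Y -> {set X}) (G H : {set Y}) : G \subset H -> muc col G <= muc col H.
Proof.
move=> sGH; have sR : relc col G \subset relc col H.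
  by apply/subsetP=> u; rewrite !inE => /andP[/(subsetP sGH) -> ->].
rewrite /muc leq_add ?subset_leq_card //.
apply/subsetP=> x /actP[u Hu Hx]; apply/actP; exists u => //; exact: (subsetP sR).
Qed.

Lemma mu_rm_le (X Y : finType) (col : Y -> {set X}) G a : muc col (rmc col G a) <= muc col G.
Proof. by apply: mu_mono; apply/subsetP=> u; rewrite inE => /andP[]. Qed.

Lemma deg_pos (X Y : finType) (col : Y -> {set X}) G a : a \in actc col G -> 0 < degc col G a.
Proof. by case/actP=> u Hu Ha; apply/card_gt0P; exists u; rewrite inE Hu. Qed.

Lemma mu_fin (X Y : finType) (col : Y -> {set X}) (H : {set Y}) w :
  relc col H \subset [set w] -> #|col w| <= 2 -> muc col H <= 3.
Proof.
move=> sH cw; rewrite /muc.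
have h1 : #|relc col H| <= 1 by rewrite -(cards1 w) subset_leq_card.
have h2 : actc col H \subset col w.
  apply/subsetP=> x /actP[u Hu Hx]; move/subsetP: sH => /(_ u Hu); rewrite inE => /eqP <- //.
have := subset_leq_card h2; lia.
Qed.

Lemma card_le1_of (T : finType) (A : {set T}) :
  (forall x y, x \in A -> y \in A -> x = y) -> #|A| <= 1.
Proof.
move=> H; rewrite leqNgt; apply/negP => /card_gt1P[x [y [Hx Hy nxy]]].
by rewrite (H x y Hx Hy) eqxx in nxy.
Qed.

Lemma two_of (T : finType) (A : {set T}) : #|A| = 2 -> exists u v, [/\ u \in A, v \in A & u != v].
Proof. by move=> h; apply/card_gt1P; rewrite h. Qed.



Lemma couple_le (T : finType) (A B : {set T}) :
  ~~ ((A != set0) && (B != set0)) -> #|A| <= 1 -> #|B| <= 1 -> #|A| + #|B| <= 1.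
Proof.
rewrite negb_and !negbK => /orP[] /eqP -> ; rewrite cards0; lia.
Qed.

Lemma PM (X Y : finType) (col : Y -> {set X}) (R4 : {set Y}) (Q : {set X}) :
  #|R4| = 4 -> 4 <= #|Q| ->
  (forall q, q \in Q -> exists u v, [/\ u \in R4, v \in R4, u != v, q \in col u & q \in col v]) ->
  (forall u v, u \in R4 -> v \in R4 -> u != v -> #|Q :&: col u :&: col v| <= 1) ->
  exists a b, forall u, u \in R4 -> (a \in col u) || (b \in col u).
Proof.
move=> cR cQ Hq Hl.
have : size (enum R4) = 4 by rewrite -cardE.
have Hu := enum_uniq (mem R4).
have Hm : forall u, (u \in R4) = (u \in enum R4) by move=> u; rewrite mem_enum.
case: (enum R4) Hu Hm => [|y1 [|y2 [|y3 [|y4 [|? ?]]]]] //= Hu Hm _.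
move: Hu; rewrite /= !inE !negb_or.
case/and4P => /and3P[n12 n13 n14] /andP[n23 n24] n34 _.
have Hin : forall u, u \in R4 -> [\/ u = y1, u = y2, u = y3 | u = y4].
  by move=> u; rewrite Hm !inE => /or4P[] /eqP ->; [constructor 1|constructor 2|constructor 3|constructor 4].
have R1 : y1 \in R4 by rewrite Hm !inE eqxx.
have R2 : y2 \in R4 by rewrite Hm !inE eqxx !orbT.
have R3 : y3 \in R4 by rewrite Hm !inE eqxx !orbT.
have R5 : y4 \in R4 by rewrite Hm !inE eqxx !orbT.
pose I u v := Q :&: col u :&: col v.
have HI : forall x u v, x \in I u v -> (x \in col u) && (x \in col v).
  by move=> x u v; rewrite !inE => /andP[/andP[_ ->] ->].
case E1 : ((I y1 y2 != set0) && (I y3 y4 != set0)).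
  case/andP: E1 => /set0Pn[a /HI/andP[a1 a2]] /set0Pn[b /HI/andP[b3 b4]].
  by exists a, b => u /Hin[] ->; rewrite ?a1 ?a2 ?b3 ?b4 ?orbT.
case E2 : ((I y1 y3 != set0) && (I y2 y4 != set0)).
  case/andP: E2 => /set0Pn[a /HI/andP[a1 a3]] /set0Pn[b /HI/andP[b2 b4]].
  by exists a, b => u /Hin[] ->; rewrite ?a1 ?a3 ?b2 ?b4 ?orbT.
case E3 : ((I y1 y4 != set0) && (I y2 y3 != set0)).
  case/andP: E3 => /set0Pn[a /HI/andP[a1 a4]] /set0Pn[b /HI/andP[b2 b3]].
  by exists a, b => u /Hin[] ->; rewrite ?a1 ?a4 ?b2 ?b3 ?orbT.
exfalso.
have Hsub : Q \subset ((I y1 y2 :|: I y3 y4) :|: (I y1 y3 :|: I y2 y4)) :|: (I y1 y4 :|: I y2 y3).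
  apply/subsetP=> q Hq'; have [u [v [Hu' Hv' nuv qu qv]]] := Hq q Hq'.
  case: (Hin u Hu') => Eu; case: (Hin v Hv') => Ev; subst u v;
    first [by rewrite eqxx in nuv | by rewrite !inE Hq' qu qv /= ?orbT].
have L : forall u v, u \in R4 -> v \in R4 -> u != v -> #|I u v| <= 1 by exact: Hl.
have c1 := couple_le (negbT E1) (L _ _ R1 R2 n12) (L _ _ R3 R5 n34).
have c2 := couple_le (negbT E2) (L _ _ R1 R3 n13) (L _ _ R2 R5 n24).
have c3 := couple_le (negbT E3) (L _ _ R1 R5 n14) (L _ _ R2 R3 n23).
have h0 := subset_leq_card Hsub.
have u1 := card_le_U (I y1 y2) (I y3 y4).
have u2 := card_le_U (I y1 y3) (I y2 y4).
have u3 := card_le_U (I y1 y4) (I y2 y3).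
have u4 := card_le_U (I y1 y2 :|: I y3 y4) (I y1 y3 :|: I y2 y4).
have u5 := card_le_U ((I y1 y2 :|: I y3 y4) :|: (I y1 y3 :|: I y2 y4)) (I y1 y4 :|: I y2 y3).
move: c1 c2 c3 h0 u1 u2 u3 u4 u5 cQ.
set a1 := #|I y1 y2|. set a2 := #|I y3 y4|. set a3 := #|I y1 y3|. set a4 := #|I y2 y4|.
set a5 := #|I y1 y4|. set a6 := #|I y2 y3|.
set b1 := #|I y1 y2 :|: I y3 y4|. set b2 := #|I y1 y3 :|: I y2 y4|. set b3 := #|I y1 y4 :|: I y2 y3|.
set b4 := #|_ :|: (I y1 y3 :|: I y2 y4)|. set b5 := #|_ :|: (I y1 y4 :|: I y2 y3)|.
clear -a1. move=> *. lia.
Qed.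


Lemma dcount (X Y : finType) (col : Y -> {set X}) (R : {set Y}) (D : {set X}) :
  (forall u, u \in R -> col u \subset D) ->
  \sum_(u in R) #|col u| = \sum_(x in D) #|[set u in R | x \in col u]|.
Proof.
move=> HD.
transitivity (\sum_(u in R) \sum_(x in D) (if x \in col u then 1 else 0)).
  apply: eq_bigr => u Hu; rewrite -big_mkcondr /= -sum1_card.
  apply: eq_bigl => x; rewrite /=; case E: (x \in col u); rewrite ?andbT ?andbF //.
  by rewrite (subsetP (HD u Hu)).
rewrite exchange_big; apply: eq_bigr => x _.
rewrite -big_mkcondr /= -sum1_card. apply: eq_bigl => u; by rewrite inE.
Qed.

Lemma binvals : 'C(0,2) = 0 /\ 'C(1,2) = 0 /\ 'C(2,2) = 1 /\ 'C(3,2) = 3 /\ 'C(4,2) = 6 /\ 'C(5,2) = 10.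
Proof. by []. Qed.

Lemma arith7 d1 d2 r1 r2 : d1 = r1 * 2 -> r2 * 2 <= d2 * 2 -> d2 <= 'C(r2, 2) ->
  d1 + d2 + r1 + r2 <> 7.
Proof.
move=> h1 h2 h3 h4.
have : r2 <= 3 by lia.
have [B0 [B1 [B2 [B3 [B4 B5]]]]] := binvals.
case: r2 h2 h3 h4 => [|[|[|[|r2]]]] h2 h3 h4 h5;
  rewrite ?B0 ?B1 ?B2 ?B3 in h3; lia.
Qed.

Lemma arith11 d1 d2 r1 r2 : d1 = r1 * 2 -> r2 * 2 <= d2 * 2 -> d2 <= 'C(r2, 2) ->
  d1 + d2 + r1 + r2 = 11 -> (r1 = 1 /\ r2 = 4 /\ d2 = 4) \/ (r1 = 0 /\ r2 = 5 /\ d2 = 6).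
Proof.
move=> h1 h2 h3 h4.
have : r2 <= 5 by lia.
have [B0 [B1 [B2 [B3 [B4 B5]]]]] := binvals.
case: r2 h2 h3 h4 => [|[|[|[|[|[|r2]]]]]] h2 h3 h4 h5;
  rewrite ?B0 ?B1 ?B2 ?B3 ?B4 ?B5 in h3; lia.
Qed.


Lemma residual (X Y : finType) (col : Y -> {set X}) (G : {set Y}) :
  (forall a, muc col G <= muc col (rmc col G a) + 3) ->
  [/\ (forall a, a \in actc col G -> muc col (rmc col G a) + 3 <= muc col G),
      muc col G <> 7 &
      (muc col G = 11 -> exists a b, muc col (rmc col (rmc col G a) b) <= 3)].
Proof.
move=> Hres.
set R := relc col G. set A := actc col G.
have drop a : a \in A -> 1 + degc col G a + #|lost col G a| <= 3.
  by move=> Ha; have := mu_rm Ha; have := Hres a; lia.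
have P1 a : a \in A -> degc col G a <= 2 by move=> Ha; have := drop a Ha; lia.
have inA u x : u \in R -> x \in col u -> x \in A.
  by move=> Hu Hx; apply: (subsetP (col_act Hu)).
have P2 a y : a \in A -> degc col G a = 2 -> y \in A -> y != a ->
    y \in actc col (rmc col G a).
  move=> Ha Hd Hy nya; apply/negPn/negP => Hn.
  have : y \in lost col G a by rewrite !inE Hn nya Hy.
  move=> Hl; have := drop a Ha; rewrite Hd.
  have : 0 < #|lost col G a| by apply/card_gt0P; exists y.
  lia.
have two_le x u v : u \in R -> v \in R -> u != v -> x \in col u -> x \in col v ->
    2 <= degc col G x.
  move=> Hu Hv nuv xu xv; rewrite /degc.
  have : [set u; v] \subset cols col G x.
    have cu : u \in cols col G x by rewrite /cols in_set Hu xu.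
    have cv : v \in cols col G x by rewrite /cols in_set Hv xv.
    by apply/subsetP=> z; rewrite in_set2 => /orP[] /eqP ->.
  by move/subset_leq_card; rewrite cards2 nuv.
have P4 x u y : x \in A -> degc col G x = 2 -> u \in R -> x \in col u -> y \in col u ->
    degc col G y = 2.
  move=> Hx Hd Hu xu yu.
  have [-> //|nyx] := eqVneq y x.
  have yA : y \in A := inA u y Hu yu.
  have /actP[v] := P2 x y Hx Hd yA nyx.
  rewrite relc_rm inE => /andP[Hv xv] yv.
  have nuv : u != v by apply: contraNneq xv => <-.
  have := two_le y u v Hu Hv nuv yu yv; have := P1 y yA; lia.
have P5 u v x y : u \in R -> v \in R -> u != v -> x \in col u -> x \in col v ->
    y \in col u -> y \in col v -> x = y.
  move=> Hu Hv nuv xu xv yu yv.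
  have xA : x \in A := inA u x Hu xu.
  have dx : degc col G x = 2 by have := two_le x u v Hu Hv nuv xu xv; have := P1 x xA; lia.
  apply/eqP; apply/negPn/negP => nxy.
  have yA : y \in A := inA u y Hu yu.
  have nyx : y != x by rewrite eq_sym.
  have /actP[w] := P2 x y xA dx yA nyx.
  rewrite relc_rm inE => /andP[Hw xw] yw.
  have nwu : w != u by apply: contraNneq xw => ->.
  have nwv : w != v by apply: contraNneq xw => ->.
  have : w |: [set u; v] \subset cols col G y.
    have cu : u \in cols col G y by rewrite /cols in_set Hu yu.
    have cv : v \in cols col G y by rewrite /cols in_set Hv yv.
    have cw : w \in cols col G y by rewrite /cols in_set Hw yw.
    by apply/subsetP=> z; rewrite in_setU1 in_set2 => /or3P[] /eqP ->.
  move/subset_leq_card; rewrite cardsU1 cards2 nuv in_set2 (negbTE nwu) (negbTE nwv) orbF.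
  by move/leq_trans/(_ (P1 y yA)).
have lostI x u y : u \in R -> x \in col u -> y \in col u -> y != x ->
    degc col G y = 1 -> y \in lost col G x.
  move=> Hu xu yu nyx dy.
  rewrite /lost in_setD in_setD1 nyx (inA u y Hu yu) /= andbT.
  apply/negP => /actP[v]; rewrite relc_rm inE => /andP[Hv xv] yv.
  have nuv : u != v by apply: contraNneq xv => <-.
  have := two_le y u v Hu Hv nuv yu yv; rewrite dy; by [].
have P6 x u : x \in A -> degc col G x = 1 -> u \in R -> x \in col u ->
    #|col u| = 2 /\ (forall y, y \in col u -> degc col G y = 1).
  move=> xA dx Hu xu.
  have dy : forall y, y \in col u -> degc col G y = 1.
    move=> y yu; have yA := inA u y Hu yu.
    have h1 := deg_pos yA; have h2 := P1 y yA.
    case E: (degc col G y == 2).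
      by have := P4 y u x yA (eqP E) Hu yu xu; rewrite dx.
    move/negbT: E => E; move: h1 h2 E; clear; case: (degc col G y) => [|[|[|n]]] //.
  split => //.
  have sub : col u :\ x \subset lost col G x.
    apply/subsetP=> y; rewrite in_setD1 => /andP[nyx yu].
    exact: lostI x u y Hu xu yu nyx (dy y yu).
  have h1 := subset_leq_card sub; have h2 := drop x xA; rewrite dx in h2.
  have h3 := cardsD1 x (col u); rewrite xu in h3.
  have h4 : 1 < #|col u| by move: Hu; rewrite inE => /andP[].
  move: h1 h2 h3 h4; clear; lia.
have drop3 a : a \in A -> muc col (rmc col G a) + 3 <= muc col G.
  move=> aA; have h := mu_rm aA; have h1 := deg_pos aA; have h2 := P1 a aA.
  case E: (degc col G a == 2).
    by move/eqP: E h => E h; rewrite E in h; move: h; clear; lia.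
  have da : degc col G a = 1 by move: h1 h2 E; clear; case: (degc col G a) => [|[|[|n]]].
  have /card_gt0P[u] : 0 < #|cols col G a| by rewrite -/(degc col G a) da.
  rewrite /cols in_set => /andP[Hu au].
  have [c2 dy] := P6 a u aA da Hu au.
  have /card_gt0P[y] : 0 < #|col u :\ a|.
    by have := cardsD1 a (col u); rewrite au c2; clear; lia.
  rewrite in_setD1 => /andP[nya yu].
  have := lostI a u y Hu au yu nya (dy y yu) => yl.
  have : 0 < #|lost col G a| by apply/card_gt0P; exists y.
  move: h; rewrite da; clear; lia.
have degA x : x \in A -> degc col G x = 1 \/ degc col G x = 2.
  move=> xA; have h1 := deg_pos xA; have h2 := P1 x xA; move: h1 h2; clear.
  by case: (degc col G x) => [|[|[|n]]] // _ _; [left|right].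
pose D2 := [set x in A | degc col G x == 2].
pose D1 := A :\: D2.
pose R2 := [set u in R | col u \subset D2].
pose R1 := R :\: R2.
have D2A : D2 \subset A by apply/subsetP=> x; rewrite inE => /andP[].
have R2R : R2 \subset R by apply/subsetP=> x; rewrite inE => /andP[].
have inR u : u \in R -> 1 < #|col u| by rewrite inE => /andP[].
have R1P u : u \in R1 -> #|col u| = 2 /\ col u \subset D1.
  rewrite in_setD inE negb_and => /andP[/orP[/negP //|/subsetPn[x xu xD2]] Hu].
  have xA := inA u x Hu xu.
  have dx : degc col G x = 1.
    by case: (degA x xA) => // d; move: xD2; rewrite inE xA d eqxx.
  have [c2 dy] := P6 x u xA dx Hu xu.
  split => //; apply/subsetP=> y yu; rewrite in_setD inE (inA u y Hu yu) dy //.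
have toR u : (u \in G) && (1 < #|col u|) -> u \in R by rewrite inE.
have D2cols x : x \in D2 -> [set u in R2 | x \in col u] = cols col G x.
  move=> xD; have xA : x \in A by move: xD; rewrite inE => /andP[].
  have dx : degc col G x = 2 by move: xD; rewrite inE => /andP[_ /eqP].
  apply/setP=> u; rewrite !inE; apply/andP/andP => [[/andP[Hu _] xu]|[Hu xu]] //.
  split=> //; apply/andP; split=> //; apply/subsetP=> y yu.
  by rewrite inE (inA u y (toR _ Hu) yu) (P4 x u y xA dx (toR _ Hu) xu yu) eqxx.
have D1cols x : x \in D1 -> [set u in R1 | x \in col u] = cols col G x.
  move=> xD; have xD2 : x \notin D2 by move: xD; rewrite in_setD => /andP[].
  apply/setP=> u; rewrite !inE; apply/andP/andP => [[/andP[_ Hu] xu]|[Hu xu]] //.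
  split=> //; rewrite Hu andbT; apply/negP => /andP[_ /subsetP/(_ x xu)].
  by apply/negP.
have degD2 x : x \in D2 -> degc col G x = 2 by rewrite inE => /andP[_ /eqP].
have degD1 x : x \in D1 -> degc col G x = 1.
  rewrite in_setD => /andP[xD2 xA]; case: (degA x xA) => // d.
  by move: xD2; rewrite inE xA d eqxx.
have sum2 : \sum_(u in R2) #|col u| = #|D2| * 2.
  rewrite (dcount (D:=D2)); last by move=> u; rewrite inE => /andP[].
  rewrite -sum_nat_const; apply: eq_bigr => x xD.
  by rewrite D2cols // -/(degc col G x) degD2.
have sum1 : \sum_(u in R1) #|col u| = #|D1| * 1.
  rewrite (dcount (D:=D1)); last by move=> u /R1P[].
  rewrite -sum_nat_const; apply: eq_bigr => x xD.
  by rewrite D1cols // -/(degc col G x) degD1.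
have sum1' : \sum_(u in R1) #|col u| = #|R1| * 2.
  by rewrite -sum_nat_const; apply: eq_bigr => u /R1P[].
have r2d2 : #|R2| * 2 <= #|D2| * 2.
  rewrite -sum2 -sum_nat_const; apply: leq_sum => u; rewrite inE => /andP[/inR].
  by [].
have binom : #|D2| <= 'C(#|R2|, 2).
  rewrite -cards_draws.
  have inj : {in D2 &, injective (cols col G)}.
    move=> x y xD yD E.
    have := degD2 x xD; rewrite /degc => /two_of[u [v [Hu Hv nuv]]].
    have Hu' := Hu; have Hv' := Hv; rewrite E in Hu' Hv'.
    move: Hu Hv Hu' Hv'; rewrite !inE => /andP[Hu xu] /andP[Hv xv] /andP[_ yu] /andP[_ yv].
    exact: P5 u v x y (toR _ Hu) (toR _ Hv) nuv xu xv yu yv.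
  rewrite -(card_in_imset inj); apply: subset_leq_card; apply/subsetP=> P /imsetP[x xD ->].
  rewrite inE -D2cols //; apply/andP; split.
    by apply/subsetP=> u; rewrite inE => /andP[].
  by rewrite D2cols // -/(degc col G x) degD2.
have muE : muc col G = #|D1| + #|D2| + #|R1| + #|R2|.
  rewrite /muc -/A -/R.
  have h1 := cardsID D2 A; rewrite (setIidPr D2A) in h1.
  have h2 := cardsID R2 R; rewrite (setIidPr R2R) in h2.
  move: h1 h2; rewrite -/D1 -/R1; clear; lia.
have e1 : #|D1| = #|R1| * 2 by rewrite -sum1' sum1 muln1.
have toR2 u : u \in R2 -> u \in R by apply: (subsetP R2R).
have colsq q : q \in D2 -> exists u v, [/\ u \in R2, v \in R2, u != v, q \in col u & q \in col v].
  move=> qD; have := degD2 q qD; rewrite /degc -D2cols // => /two_of[u [v [Hu Hv nuv]]].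
  move: Hu; rewrite in_set => /andP[Hu qu]; move: Hv; rewrite in_set => /andP[Hv qv].
  by exists u, v.
have lin (Q : {set X}) u v : Q \subset D2 -> u \in R2 -> v \in R2 -> u != v ->
    #|Q :&: col u :&: col v| <= 1.
  move=> _ Hu Hv nuv; apply: card_le1_of => x y.
  rewrite !inE => /andP[/andP[_ xu] xv] /andP[/andP[_ yu] yv].
  exact: P5 u v x y (toR2 _ Hu) (toR2 _ Hv) nuv xu xv yu yv.
have relrm a b u : u \in relc col (rmc col (rmc col G a) b) ->
    [/\ u \in R, a \notin col u & b \notin col u].
  by rewrite relc_rm inE relc_rm inE => /andP[/andP[-> ->] ->].
split => //.
  by rewrite muE; exact: arith7 e1 r2d2 binom.
rewrite muE => H11.
case: (arith11 e1 r2d2 binom H11) => [[c1 [c2 c3]]|[c1 [c2 c3]]].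
  have [a [b Hab]] : exists a b, forall u, u \in R2 -> (a \in col u) || (b \in col u).
    apply: (PM (R4:=R2) (Q:=D2)) => //; first by rewrite c3.
    by move=> u v Hu Hv nuv; apply: lin.
  exists a, b.
  have /cards1P[r Er] : #|R1| == 1 by rewrite c1.
  have rR1 : r \in R1 by rewrite Er set11.
  apply: (mu_fin (w:=r)); last by have [-> _] := R1P r rR1.
  apply/subsetP=> u /relrm[Hu au bu]; rewrite -Er in_setD Hu andbT.
  by apply/negP => /Hab; rewrite (negbTE au) (negbTE bu).
have [w wR2 cw] : exists2 w, w \in R2 & #|col w| <= 2.
  case: (pickP [pred u in R2 | #|col u| <= 2]) => [w /andP[h1 h2]|none].
    by exists w.
  have : \sum_(u in R2) 3 <= \sum_(u in R2) #|col u|.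
    apply: leq_sum => u uR; have := none u; rewrite /= uR /= => /negbT.
    by rewrite -ltnNge.
  rewrite sum2 sum_nat_const c2 c3; by [].
have cw2 : #|col w| = 2 by have := inR w (toR2 _ wR2); move: cw; clear; lia.
have wD2 : col w \subset D2 by move: wR2; rewrite inE => /andP[].
have [a [b Hab]] : exists a b, forall u, u \in R2 :\ w -> (a \in col u) || (b \in col u).
  apply: (PM (R4:=R2 :\ w) (Q:=D2 :\: col w)).
  - by have := cardsD1 w R2; rewrite wR2 c2; clear; lia.
  - have := cardsID (col w) D2; rewrite (setIidPr wD2) cw2 c3; clear; lia.
  - move=> q; rewrite in_setD => /andP[qw qD].
    have [u [v [Hu Hv nuv qu qv]]] := colsq q qD.
    exists u, v; rewrite !in_setD1 Hu Hv nuv qu qv !andbT; split => //.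
      by apply: contraNneq qw => <-.
    by apply: contraNneq qw => <-.
  - move=> u v; rewrite !in_setD1 => /andP[_ Hu] /andP[_ Hv] nuv.
    apply: lin => //; exact: subsetDl.
exists a, b; apply: (mu_fin (w:=w)); last by rewrite cw2.
apply/subsetP=> u /relrm[Hu au bu]; rewrite in_set1; apply/eqP.
have uR2 : u \in R2.
  apply/negPn/negP => nu.
  have : u \in R1 by rewrite in_setD nu Hu.
  by rewrite (cards0_eq c1) in_set0.
apply/eqP/negPn/negP => nuw.
by have := Hab u; rewrite in_setD1 nuw uR2 (negbTE au) (negbTE bu) => /(_ isT).
Qed.


Lemma act0 (X Y : finType) (col : Y -> {set X}) (G : {set Y}) :
  actc col G = set0 -> muc col G = 0.
Proof.
move=> A0; rewrite /muc A0 cards0 /=; apply/eqP; rewrite cards_eq0; apply/eqP/setP=> u.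
rewrite in_set0; apply/negP => Hu.
have : 1 < #|col u| by move: Hu; rewrite inE => /andP[].
move/card_gt1P => [x [y [xu _ _]]].
by have := subsetP (col_act Hu) x xu; rewrite A0 in_set0.
Qed.

Lemma nodrop (X Y : finType) (col : Y -> {set X}) (G : {set Y}) :
  (forall a, ~~ (muc col (rmc col G a) + 4 <= muc col G)) ->
  forall a, muc col G <= muc col (rmc col G a) + 3.
Proof. by move=> H a; have := H a; rewrite -ltnNge; clear; lia. Qed.

Lemma T1 (X Y : finType) (col : Y -> {set X}) (G : {set Y}) (x0 : X) :
  muc col G <= 7 -> exists b, muc col (rmc col G b) <= 3.
Proof.
move=> H7.
case: (pickP (fun a => muc col (rmc col G a) + 4 <= muc col G)) => [a Ha|none].
  by exists a; move: Ha H7; clear; lia.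
have [D3 N7 _] := residual (nodrop (fun a => negbT (none a))).
case: (set_0Vmem (actc col G)) => [A0|[a aA]].
  by exists x0; have := mu_rm_le col G x0; rewrite (act0 A0) => h; apply: leq_trans h _.
by exists a; have := D3 a aA; move: H7 N7; clear; lia.
Qed.

Lemma T2 (X Y : finType) (col : Y -> {set X}) (G : {set Y}) (x0 : X) :
  muc col G <= 11 -> exists a b, muc col (rmc col (rmc col G a) b) <= 3.
Proof.
move=> H11.
case: (pickP (fun a => muc col (rmc col G a) + 4 <= muc col G)) => [a Ha|none].
  have Ha' : muc col (rmc col G a) <= 7 by move: Ha H11 => /= Ha H11; clear -Ha H11; lia.
  have [b Hb] := T1 x0 Ha'.
  by exists a, b.
have [D3 _ E11] := residual (nodrop (fun a => negbT (none a))).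
case: (set_0Vmem (actc col G)) => [A0|[a aA]].
  exists x0, x0; have := mu_rm_le col (rmc col G x0) x0; have := mu_rm_le col G x0.
  by rewrite (act0 A0); clear; lia.
case E: (muc col G == 11); first by apply: E11; apply/eqP.
have Ha' : muc col (rmc col G a) <= 7.
  by have := D3 a aA; move/negbT: E => E; move: H11 E; clear; lia.
have [b Hb] := T1 x0 Ha'.
by exists a, b.
Qed.


Definition ste (n : nat) : rel 'I_n.+1 := fun i j => (i == ord0) (+) (j == ord0).

Definition spath (n : nat) (x y : 'I_n.+1) : seq 'I_n.+1 :=
  if x == y then [::] else if (x == ord0) || (y == ord0) then [:: y] else [:: ord0; y].

Lemma spath_uniq n (x y : 'I_n.+1) p : simple_path (@ste n) x y p -> p = spath x y.
Proof.
case/and3P; rewrite /spath.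
case: p => [|z1 [|z2 q]] /=.
- by move=> _ /eqP ->; rewrite eqxx.
- move=> /andP[h _] /eqP <-; rewrite inE andbT => nxz.
  rewrite (negbTE nxz); move: h; rewrite /ste.
  by case: (x == ord0); case: (z1 == ord0).
- move=> /and3P[h1 h2 h3] Hl; rewrite !inE !negb_or => /and3P[/and3P[nx1 nx2 nxq] /andP[n12 n1q] _].
  move: h1 h2; rewrite /ste.
  case E1: (z1 == ord0) => /=.
    rewrite addbT => /negbTE nx0 nz2.
    case: q h3 Hl nxq n1q => [|z3 q] /=.
      move=> _ /eqP <- _ _; rewrite (negbTE nx2) nx0 (negbTE nz2) /=.
      by move/eqP: E1 => ->.
    move=> /andP[h3 _] _ _; rewrite inE negb_or => /andP[n13 _].
    move: h3; rewrite /ste (negbTE nz2) /= => /eqP E3.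
    by move: n13; rewrite E3 (eqP E1) eqxx.
  rewrite addbF => Ex Ez2.
  by move: nx2; rewrite (eqP Ex) (eqP Ez2) eqxx.
Qed.

Lemma ste_tree n : is_tree (@ste n).
Proof.
split.
- by move=> x y; rewrite /ste addbC.
- by move=> x; rewrite /ste addbb.
- move=> x y.
  have h0 : forall z, connect (@ste n) z ord0.
    move=> z; case E: (z == ord0); first by rewrite (eqP E) connect0.
    by apply: connect1; rewrite /ste E eqxx.
  have h1 : forall z, connect (@ste n) ord0 z.
    move=> z; case E: (z == ord0); first by rewrite (eqP E) connect0.
    by apply: connect1; rewrite /ste E eqxx.
  exact: connect_trans (h0 x) (h1 y).
- by move=> x y p q /spath_uniq -> /spath_uniq ->.
Qed.

Lemma spath_mem n (x y t : 'I_n.+1) : t \in x :: spath x y ->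
  [\/ t = x, t = y | [/\ t = ord0, x != ord0, y != ord0 & x != y]].
Proof.
rewrite /spath; case: ifP => [_|nxy]; first by rewrite inE => /eqP ->; constructor 1.
case: ifP => [_|/negbT]; first by rewrite !inE => /orP[] /eqP ->; [constructor 1|constructor 2].
rewrite negb_or => /andP[nx ny]; rewrite !inE => /or3P[] /eqP ->;
  [constructor 1| constructor 3 | constructor 2] => //.
Qed.

Lemma source_reach (V : finType) (d : rel V) s x :
  s \in sources d -> connect d x s -> x = s.
Proof.
move=> Hs /connectP[p Hp Es]; move: Hp Es; case/lastP: p => [|p y] /=; first by move=> _ ->.
rewrite rcons_path last_rcons => /andP[_ Hd] Es; subst y.
by move: Hs; rewrite inE => /forallP/(_ (last x p)); rewrite Hd.
Qed.

Lemma reachBP (V : finType) (d : rel V) (B : {set V}) z :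
  reflect (exists2 s, s \in B & connect d s z) (z \in reachB d B).
Proof.
apply: (iffP bigcupP) => [[s Hs]|[s Hs Hz]].
  by rewrite inE => Hz; exists s.
by exists s; rewrite ?inE.
Qed.

Definition lv (V : finType) (i : 'I_#|V|.+1) : option V := omap enum_val (unlift ord0 i).

Lemma lv0 (V : finType) : lv (ord0 : 'I_#|V|.+1) = None.
Proof. by rewrite /lv unlift_none. Qed.

Lemma lvK (V : finType) (v : V) : lv (lift ord0 (enum_rank v)) = Some v.
Proof. by rewrite /lv liftK /= enum_rankK. Qed.

Lemma lvS (V : finType) (i : 'I_#|V|.+1) : i != ord0 -> exists v, lv i = Some v.
Proof.
rewrite /lv; case: unliftP => [j _ _|->]; first by exists (enum_val j).
by rewrite eqxx.
Qed.

Lemma lv_inj (V : finType) (i j : 'I_#|V|.+1) v : lv i = Some v -> lv j = Some v -> i = j.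
Proof.
rewrite /lv; case: unliftP => [k -> |->] //=; case: unliftP => [l -> |->] //= [<-] [].
by move/enum_val_inj => ->.
Qed.

Lemma star_dtw (V : finType) (d : rel V) (C P : {set V}) :
  C \subset sources d -> #|C| <= 2 -> P \subset sources d -> #|P| <= 2 ->
  [disjoint P & C] ->
  (forall s1 s2 w, s1 \in sources d -> s2 \in sources d -> s1 != s2 ->
     connect d s1 w -> connect d s2 w -> w \notin reachB d C -> (s1 \in P) && (s2 \in P)) ->
  dtw_le d 2.
Proof.
move=> sC cC sP cP dPC key.
pose S := sources d.
pose B (i : 'I_#|V|.+1) : {set V} :=
  if lv i is Some v then
    (if v \in S :\: C then
       (if v \in P then (if [pick x in P] == Some v then P else set0) else [set v])
     else set0)
  else C.
have B0 : B ord0 = C by rewrite /B lv0.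
have Bl i v s : lv i = Some v -> s \in B i ->
    [/\ s \in S, s \in P -> [pick x in P] = Some v & s \notin P -> s = v].
  move=> Hi; rewrite /B Hi.
  case E: (v \in S :\: C); last by rewrite in_set0.
  move: E; rewrite in_setD => /andP[_ vS].
  case E: (v \in P).
    case: eqP => [Ep sP'|]; last by rewrite in_set0.
    by split => //; [exact: (subsetP sP) | rewrite sP'].
  by rewrite in_set1 => /eqP ->; split => //; rewrite E.
exists #|V|, (@ste #|V|), B; split; last first.
  apply/bigmax_leqP => i _; rewrite /B; case: (lv i) => [v|] //.
  case: (v \in S :\: C); last by rewrite cards0.
  case: (v \in P); last by rewrite cards1.
  by case: (_ == _) => //; rewrite cards0.
split.
- exact: ste_tree.
- move=> t; rewrite /B; case: (lv t) => [v|] //.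
  case E: (v \in S :\: C); last by rewrite sub0set.
  case: (v \in P); last by rewrite sub1set; move: E; rewrite in_setD => /andP[].
  by case: (_ == _) => //; rewrite sub0set.
- move=> s Hs.
  case sC': (s \in C); first by exists ord0; rewrite B0.
  case sP': (s \in P).
    have [x0 x0P Ep] : exists2 x0, x0 \in P & [pick x in P] = Some x0.
      by case: pickP => [x0 h|none]; [exists x0 | have := none s; rewrite /= sP'].
    exists (lift ord0 (enum_rank x0)); rewrite /B lvK.
    have x0S : x0 \in S :\: C.
      rewrite in_setD (subsetP sP) // andbT.
      by rewrite (disjointFr dPC x0P).
    by rewrite x0S x0P Ep eqxx.
  by exists (lift ord0 (enum_rank s)); rewrite /B lvK in_setD sC' Hs sP' set11.
- move=> t1 t2 p t /spath_uniq -> /spath_mem [->|->|[-> n1 n2 n12]].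
  + exact: subsetIl.
  + exact: subsetIr.
  + rewrite B0; apply/subsetP=> z; rewrite in_setI => /andP[/reachBP[s1 s1B z1] /reachBP[s2 s2B z2]].
    have [v1 E1] := lvS n1; have [v2 E2] := lvS n2.
    have nv : v1 != v2.
      by apply: contraNneq n12 => Ev; rewrite Ev in E1; rewrite (lv_inj E1 E2).
    have [s1S s1P s1N] := Bl _ _ _ E1 s1B; have [s2S s2P s2N] := Bl _ _ _ E2 s2B.
    apply/negPn/negP => zC.
    case: (eqVneq s1 s2) => [Es|ns].
      subst s2; case sP': (s1 \in P).
        by move: (s1P sP') (s2P sP') => -> [] Ev; rewrite Ev eqxx in nv.
      by move: (s1N (negbT sP')) (s2N (negbT sP')) => -> Ev; rewrite Ev eqxx in nv.
    have /andP[p1 p2] := key s1 s2 z s1S s2S ns z1 z2 zC.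
    by move: (s1P p1) (s2P p2) => -> [] Ev; rewrite Ev eqxx in nv.
Qed.


Theorem mainTheorem17 (V : finType) (e : rel V) :
  simple_graph e -> #|V| <= 11 ->
  forall d : rel V, orientation e d -> acyclic_digraph d -> dtw_le d 2.
Proof.
move=> _ HV d _ _.
pose S := sources d.
pose col (u : V) : {set V} := if u \in S then set0 else [set x in S | connect d x u].
case: (set_0Vmem [set: V]) => [V0|[x0 _]].
  apply: (star_dtw (C:=set0) (P:=set0)); rewrite ?sub0set ?cards0 //.
    by rewrite disjoint_subset; apply/subsetP => x; rewrite in_set0.
  move=> s1; have h : s1 \in [set: V] by rewrite inE.
  by rewrite V0 in_set0 in h.
have colS u : col u \subset S.
  by rewrite /col; case: (u \in S); [exact: sub0set | apply/subsetP=> x; rewrite inE => /andP[]].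
have Hmu : muc col setT <= 11.
  have h1 : actc col setT \subset S.
    by apply/subsetP=> x /actP[u _ xu]; exact: (subsetP (colS u)).
  have h2 : relc col setT \subset ~: S.
    apply/subsetP=> u; rewrite /relc in_set => /andP[_]; rewrite in_setC /col.
    by case: (u \in S) => //; rewrite cards0.
  have := cardsC S; have := subset_leq_card h1; have := subset_leq_card h2.
  rewrite /muc; move: HV; clear; lia.
have [a [b Hab]] := T2 x0 Hmu.
pose H := rmc col (rmc col setT a) b.
pose C := [set x in S | (x == a) || (x == b)].
pose P := actc col H.
have relH u : u \in relc col H -> [/\ 1 < #|col u|, a \notin col u & b \notin col u].
  rewrite /H !relc_rm in_set => /andP[h ->]; move: h; rewrite in_set => /andP[h ->].
  by move: h; rewrite /relc in_set => /andP[_ ->].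
apply: (star_dtw (C:=C) (P:=P)).
- by apply/subsetP=> x; rewrite inE => /andP[].
- have : C \subset [set a; b] by apply/subsetP=> x; rewrite !inE => /andP[].
  by move/subset_leq_card => h; apply: leq_trans h _; rewrite cards2; case: (a != b).
- by apply/subsetP=> x /actP[u _ xu]; exact: (subsetP (colS u)).
- case: (set_0Vmem (relc col H)) => [R0|[u Hu]].
    by rewrite /P /actc R0 big_set0 cards0.
  have : 0 < #|relc col H| by apply/card_gt0P; exists u.
  move: Hab; rewrite /muc -/H -/P; clear; lia.
- rewrite disjoint_subset; apply/subsetP=> x /actP[u /relH[_ au bu] xu].
  rewrite inE /=; apply/negP; rewrite inE => /andP[_ /orP[] /eqP Ex].
    by move: au; rewrite -Ex xu.
  by move: bu; rewrite -Ex xu.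
- move=> s1 s2 w s1S s2S ns c1 c2 wC.
  have wS : w \notin S.
    apply/negP => wS.
    by move: ns; rewrite (source_reach wS c1) (source_reach wS c2) eqxx.
  have colw : col w = [set x in S | connect d x w] by rewrite /col (negbTE wS).
  have s1w : s1 \in col w by rewrite colw inE s1S.
  have s2w : s2 \in col w by rewrite colw inE s2S.
  have aw : a \notin col w.
    apply/negP; rewrite colw inE => /andP[aS aw]; move/negP: wC; apply; apply/reachBP.
    by exists a => //; rewrite inE aS eqxx.
  have bw : b \notin col w.
    apply/negP; rewrite colw inE => /andP[bS bw]; move/negP: wC; apply; apply/reachBP.
    by exists b => //; rewrite inE bS eqxx orbT.
  have wH : w \in relc col H.
    rewrite /H !relc_rm in_set bw andbT in_set aw andbT /relc in_set in_setT /=.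
    by apply/card_gt1P; exists s1, s2.
  by rewrite (subsetP (col_act wH) s1 s1w) (subsetP (col_act wH) s2 s2w).
Qed.
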